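(* Let $r_2$ be an admissible trajectory, and let $G$, $\tau$, $T$, $e$ be as in the context. Let $G_1=\mathbb R\times(0,\infty)\times S_2$ where $S_2=\{r\in\mathbb R^3:|r|=1\}$, regarded as a $C^\infty$ manifold. Then the map $\phi:G\to G_1$, $\phi(r_1,t)=(\tau(r_1,t),T(r_1,t),e(r_1,t))$, is a bijection of $G$ onto $G_1$ with inverse $\psi(\tau,T,e)=(r_2(\tau)+Te,\ \tau+T)$, and $\phi$ is a diffeomorphism of class $C^1$. If $r_2$ is of class $C^\infty$, then $\phi$ is a $C^\infty$ diffeomorphism.
   Context: Units with $c=1$. A function $r_2:\mathbb R\to\mathbb R^3$ is an admissible trajectory if it has continuous derivatives up to order 3, $|\dot r_2(t)|<1$ for all $t$, and for every $t_1$ one has $\sup_{u\le t_1}|\dot r_2(u)|<1$ and $\sup_{u\le t_1}|\ddot r_2(u)|<\infty$. For $(r_1,t)\in\mathbb R^3\times\mathbb R$, the retarded time $\tau(r_1,t)$ is the unique $\tau\le t$ with $\tau=t-|r_1-r_2(\tau)|$; the delay is $T=t-\tau$; $G=\{(r_1,t)\in\mathbb R^3\times\mathbb R:T(r_1,t)>0\}$ is the open set of events not on the trajectory; on $G$, $e=(r_1-r_2(\tau))/T$. *)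

(* Defs.v *)
From Stdlib Require Import Reals Lra List ClassicalEpsilon.
From Stdlib Require Vectors.Fin.
Open Scope R_scope.

Definition R3 : Type := (R * R * R)%type.
Definition c1 (v : R3) : R := fst (fst v).
Definition c2 (v : R3) : R := snd (fst v).
Definition c3 (v : R3) : R := snd v.
Definition vadd (u v : R3) : R3 := (c1 u + c1 v, c2 u + c2 v, c3 u + c3 v).
Definition vsub (u v : R3) : R3 := (c1 u - c1 v, c2 u - c2 v, c3 u - c3 v).
Definition vscale (a : R) (v : R3) : R3 := (a * c1 v, a * c2 v, a * c3 v).
Definition vnorm (v : R3) : R := sqrt (c1 v ^ 2 + c2 v ^ 2 + c3 v ^ 2).

Fixpoint CkR (k : nat) (f : R -> R) : Prop :=
  match k with
  | O => continuity f
  | S k' => exists g : R -> R, (forall x, derivable_pt_lim f x (g x)) /\ CkR k' g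
  end.

Definition deriv3 (f : R -> R3) (t : R) (v : R3) : Prop :=
  derivable_pt_lim (fun s => c1 (f s)) t (c1 v) /\
  derivable_pt_lim (fun s => c2 (f s)) t (c2 v) /\
  derivable_pt_lim (fun s => c3 (f s)) t (c3 v).

Definition CkR3 (k : nat) (f : R -> R3) : Prop :=
  CkR k (fun s => c1 (f s)) /\ CkR k (fun s => c2 (f s)) /\ CkR k (fun s => c3 (f s)).

Definition CinfR3 (f : R -> R3) : Prop := forall k, CkR3 k f.

Definition admissible (r2 : R -> R3) : Prop :=
  exists v a j : R -> R3,
    (forall t, deriv3 r2 t (v t)) /\
    (forall t, deriv3 v t (a t)) /\
    (forall t, deriv3 a t (j t)) /\
    CkR3 0 j /\
    (forall t, vnorm (v t) < 1) /\
    (forall t1, exists c, c < 1 /\ forall u, u <= t1 -> vnorm (v u) <= c) /\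
    (forall t1, exists M, forall u, u <= t1 -> vnorm (a u) <= M).

Definition is_ret (r2 : R -> R3) (r1 : R3) (t tau : R) : Prop :=
  tau <= t /\ tau = t - vnorm (vsub r1 (r2 tau)).

Definition ret_time (r2 : R -> R3) (r1 : R3) (t : R) : R :=
  epsilon (inhabits 0) (fun tau => is_ret r2 r1 t tau).

Definition delay (r2 : R -> R3) (r1 : R3) (t : R) : R := t - ret_time r2 r1 t.

Definition inG (r2 : R -> R3) (r1 : R3) (t : R) : Prop := delay r2 r1 t > 0.

Definition edir (r2 : R -> R3) (r1 : R3) (t : R) : R3 :=
  vscale (/ delay r2 r1 t) (vsub r1 (r2 (ret_time r2 r1 t))).

Definition inG1 (p : R * R * R3) : Prop :=
  snd (fst p) > 0 /\ vnorm (snd p) = 1.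

Definition phi (r2 : R -> R3) (r1 : R3) (t : R) : R * R * R3 :=
  (ret_time r2 r1 t, delay r2 r1 t, edir r2 r1 t).

Definition psi (r2 : R -> R3) (p : R * R * R3) : R3 * R :=
  let '(tau, T, e) := p in (vadd (r2 tau) (vscale T e), tau + T).

Definition shift {n : nat} (x : Fin.t n -> R) (i : Fin.t n) (h : R) : Fin.t n -> R :=
  fun j => if Fin.eq_dec i j then x j + h else x j.

Definition open_set {n : nat} (U : (Fin.t n -> R) -> Prop) : Prop :=
  forall x, U x -> exists d, d > 0 /\
    forall y, (forall i, Rabs (y i - x i) < d) -> U y.

Definition cont_on {n : nat} (U : (Fin.t n -> R) -> Prop) (f : (Fin.t n -> R) -> R) : Prop :=
  forall x, U x -> forall eps, eps > 0 -> exists d, d > 0 /\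
    forall y, U y -> (forall i, Rabs (y i - x i) < d) -> Rabs (f y - f x) < eps.

Fixpoint Ck {n : nat} (k : nat) (U : (Fin.t n -> R) -> Prop) (f : (Fin.t n -> R) -> R) : Prop :=
  match k with
  | O => cont_on U f
  | S k' => cont_on U f /\
      forall i : Fin.t n, exists g : (Fin.t n -> R) -> R,
        (forall x, U x -> derivable_pt_lim (fun h => f (shift x i h)) 0 (g x)) /\
        Ck k' U g
  end.

Definition CkMap {n m : nat} (k : nat) (U : (Fin.t n -> R) -> Prop)
  (F : (Fin.t n -> R) -> (Fin.t m -> R)) : Prop :=
  forall j : Fin.t m, Ck k U (fun x => F x j).

Definition CinfMap {n m : nat} (U : (Fin.t n -> R) -> Prop)
  (F : (Fin.t n -> R) -> (Fin.t m -> R)) : Prop := forall k, CkMap k U F.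

Definition of_list {n : nat} (l : list R) : Fin.t n -> R :=
  fun i => nth (proj1_sig (Fin.to_nat i)) l 0.

Definition enc4 (q : R3 * R) : Fin.t 4 -> R :=
  of_list (c1 (fst q) :: c2 (fst q) :: c3 (fst q) :: snd q :: nil).
Definition dec4 (x : Fin.t 4 -> R) : R3 * R :=
  ((x Fin.F1, x (Fin.FS Fin.F1), x (Fin.FS (Fin.FS Fin.F1))),
    x (Fin.FS (Fin.FS (Fin.FS Fin.F1)))).
Definition enc5 (p : R * R * R3) : Fin.t 5 -> R :=
  of_list (fst (fst p) :: snd (fst p) :: c1 (snd p) :: c2 (snd p) :: c3 (snd p) :: nil).
Definition dec5 (y : Fin.t 5 -> R) : R * R * R3 :=
  (y Fin.F1, y (Fin.FS Fin.F1),
   (y (Fin.FS (Fin.FS Fin.F1)), y (Fin.FS (Fin.FS (Fin.FS Fin.F1))),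
    y (Fin.FS (Fin.FS (Fin.FS (Fin.FS Fin.F1)))))).

Definition G4 (r2 : R -> R3) (x : Fin.t 4 -> R) : Prop :=
  inG r2 (fst (dec4 x)) (snd (dec4 x)).
Definition G1_5 (y : Fin.t 5 -> R) : Prop := inG1 (dec5 y).

Definition phiV (r2 : R -> R3) (x : Fin.t 4 -> R) : Fin.t 5 -> R :=
  enc5 (phi r2 (fst (dec4 x)) (snd (dec4 x))).
Definition psiV (r2 : R -> R3) (y : Fin.t 5 -> R) : Fin.t 4 -> R :=
  enc4 (psi r2 (dec5 y)).

(* A map defined on the embedded submanifold S of R^n is of class C^k iff it
   locally extends to a C^k map on an open subset of R^n. *)
Definition CkMap_on_subset {n m : nat} (k : nat) (S : (Fin.t n -> R) -> Prop)
  (F : (Fin.t n -> R) -> (Fin.t m -> R)) : Prop :=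
  forall y, S y -> exists (V : (Fin.t n -> R) -> Prop) (Fe : (Fin.t n -> R) -> (Fin.t m -> R)),
    open_set V /\ V y /\ CkMap k V Fe /\ (forall z, V z -> S z -> Fe z = F z).

Definition CinfMap_on_subset {n m : nat} (S : (Fin.t n -> R) -> Prop)
  (F : (Fin.t n -> R) -> (Fin.t m -> R)) : Prop :=
  forall y, S y -> exists (V : (Fin.t n -> R) -> Prop) (Fe : (Fin.t n -> R) -> (Fin.t m -> R)),
    open_set V /\ V y /\ CinfMap V Fe /\ (forall z, V z -> S z -> Fe z = F z).

(* Main.v *)
Require Import Defs.
From Stdlib Require Import Reals Lra Lia ClassicalEpsilon FunctionalExtensionality.
Import Defs.
Open Scope R_scope.


Lemma dpl_const (a x : R) : derivable_pt_lim (fun _ => a) x 0.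
Proof. exact (derivable_pt_lim_const a x). Qed.
Lemma dpl_id (x : R) : derivable_pt_lim (fun y => y) x 1.
Proof. exact (derivable_pt_lim_id x). Qed.
Lemma dpl_plus f g x a b : derivable_pt_lim f x a -> derivable_pt_lim g x b ->
  derivable_pt_lim (fun y => f y + g y) x (a + b).
Proof. intros; exact (derivable_pt_lim_plus f g x a b H H0). Qed.
Lemma dpl_minus f g x a b : derivable_pt_lim f x a -> derivable_pt_lim g x b ->
  derivable_pt_lim (fun y => f y - g y) x (a - b).
Proof. intros; exact (derivable_pt_lim_minus f g x a b H H0). Qed.
Lemma dpl_mult f g x a b : derivable_pt_lim f x a -> derivable_pt_lim g x b ->
  derivable_pt_lim (fun y => f y * g y) x (a * g x + f x * b).
Proof. intros; exact (derivable_pt_lim_mult f g x a b H H0). Qed.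
Lemma dpl_comp f g x a b : derivable_pt_lim g x a -> derivable_pt_lim f (g x) b ->
  derivable_pt_lim (fun y => f (g y)) x (b * a).
Proof. intros; exact (derivable_pt_lim_comp g f x a b H H0). Qed.
Lemma dpl_ext f g x a b : (forall y, f y = g y) -> a = b -> derivable_pt_lim f x a ->
  derivable_pt_lim g x b.
Proof.
  intros Hfg -> H. replace g with f; auto. apply functional_extensionality; auto.
Qed.
Lemma dpl_inv f x a : derivable_pt_lim f x a -> f x <> 0 ->
  derivable_pt_lim (fun y => / f y) x (- a / (f x * f x)).
Proof.
  intros H Hn.
  pose proof (derivable_pt_lim_div (fun _ => 1) f x 0 a (dpl_const 1 x) H Hn) as K.
  eapply dpl_ext; [| | exact K].
  - intros y; cbv [div_fct]; unfold Rdiv; ring.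
  - unfold Rsqr; field; auto.
Qed.

Lemma cpt_plus f g x : continuity_pt f x -> continuity_pt g x -> continuity_pt (fun y => f y + g y) x.
Proof. intros; exact (continuity_pt_plus f g x H H0). Qed.
Lemma cpt_minus f g x : continuity_pt f x -> continuity_pt g x -> continuity_pt (fun y => f y - g y) x.
Proof. intros; exact (continuity_pt_minus f g x H H0). Qed.
Lemma cpt_mult f g x : continuity_pt f x -> continuity_pt g x -> continuity_pt (fun y => f y * g y) x.
Proof. intros; exact (continuity_pt_mult f g x H H0). Qed.
Lemma cpt_const a x : continuity_pt (fun _ => a) x.
Proof. apply continuity_pt_const. intros u v; reflexivity. Qed.
Lemma cpt_id x : continuity_pt (fun y => y) x.
Proof. apply derivable_continuous_pt. exists 1. exact (dpl_id x). Qed.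
Lemma cpt_comp f g x : continuity_pt g x -> continuity_pt f (g x) -> continuity_pt (fun y => f (g y)) x.
Proof. intros; exact (continuity_pt_comp g f x H H0). Qed.
Lemma cpt_inv f x : continuity_pt f x -> f x <> 0 -> continuity_pt (fun y => / f y) x.
Proof. intros; exact (continuity_pt_inv f x H H0). Qed.
Lemma cpt_of_dpl f x a : derivable_pt_lim f x a -> continuity_pt f x.
Proof. intros H. apply derivable_continuous_pt. exists a; exact H. Qed.

Lemma cpt_intro f x : (forall eps, eps > 0 -> exists d, d > 0 /\ forall y, Rabs (y - x) < d -> Rabs (f y - f x) < eps) -> continuity_pt f x.
Proof.
  intros H eps Heps. destruct (H eps Heps) as [d [Hd Hy]].
  exists d; split; auto. intros y [_ Hyd]. simpl in *. unfold R_dist in *. apply Hy; auto.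
Qed.
Lemma cpt_elim f x : continuity_pt f x -> forall eps, eps > 0 -> exists d, d > 0 /\ forall y, Rabs (y - x) < d -> Rabs (f y - f x) < eps.
Proof.
  intros H eps Heps. destruct (H eps Heps) as [d [Hd Hy]].
  exists d; split; auto. intros y Hyx.
  destruct (Req_dec y x) as [->|Hne].
  - unfold Rminus; rewrite Rplus_opp_r, Rabs_R0; auto.
  - apply (Hy y). split; [split; [exact I| congruence] | simpl; unfold R_dist; exact Hyx].
Qed.

Definition dot (u w : R3) : R := c1 u * c1 w + c2 u * c2 w + c3 u * c3 w.
Definition sq3 (u : R3) : R := c1 u ^ 2 + c2 u ^ 2 + c3 u ^ 2.

Lemma sq3_nonneg u : 0 <= sq3 u.
Proof. unfold sq3. nra. Qed.
Lemma vnorm_nonneg u : 0 <= vnorm u.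
Proof. apply sqrt_pos. Qed.
Lemma vnorm_sq u : vnorm u * vnorm u = sq3 u.
Proof. unfold vnorm. apply sqrt_sqrt. apply sq3_nonneg. Qed.
Lemma sqrt_le_of_sq a b : 0 <= b -> a <= b * b -> sqrt a <= b.
Proof. intros. rewrite <- (sqrt_square b) by auto. apply sqrt_le_1_alt; auto. Qed.
Lemma vnorm_ext u w : c1 u = c1 w -> c2 u = c2 w -> c3 u = c3 w -> vnorm u = vnorm w.
Proof. intros H1 H2 H3; unfold vnorm; rewrite H1, H2, H3; reflexivity. Qed.

Lemma cauchy_schwarz u w : Rabs (dot u w) <= vnorm u * vnorm w.
Proof.
  assert (Hs : dot u w * dot u w <= (vnorm u * vnorm w) * (vnorm u * vnorm w)).
  { replace ((vnorm u * vnorm w) * (vnorm u * vnorm w)) with ((vnorm u * vnorm u) * (vnorm w * vnorm w)) by ring.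
    rewrite !vnorm_sq. unfold sq3, dot.
    destruct u as [[a b] c]; destruct w as [[d e] f]; unfold c1, c2, c3; simpl.
    assert (0 <= (a*e-b*d)^2 + (a*f-c*d)^2 + (b*f-c*e)^2) by (apply Rplus_le_le_0_compat; [apply Rplus_le_le_0_compat|]; apply pow2_ge_0).
    nra. }
  pose proof (vnorm_nonneg u); pose proof (vnorm_nonneg w).
  apply Rsqr_le_abs_0 in Hs. rewrite (Rabs_pos_eq (vnorm u * vnorm w)) in Hs; auto.
  apply Rmult_le_pos; auto.
Qed.

Lemma vnorm_triangle u w : vnorm (vadd u w) <= vnorm u + vnorm w.
Proof.
  pose proof (vnorm_nonneg u); pose proof (vnorm_nonneg w).
  unfold vnorm at 1. apply sqrt_le_of_sq. lra.
  pose proof (vnorm_sq u); pose proof (vnorm_sq w).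
  pose proof (cauchy_schwarz u w). pose proof (Rle_abs (dot u w)).
  unfold sq3, dot, vadd, c1, c2, c3 in *; simpl in *.
  destruct u as [[a b] c]; destruct w as [[d e] f]; simpl in *. nra.
Qed.

Lemma vnorm_tri_sub a b c : vnorm (vsub a c) <= vnorm (vsub a b) + vnorm (vsub b c).
Proof.
  eapply Rle_trans; [| apply vnorm_triangle].
  right; apply vnorm_ext; unfold vsub, vadd, c1, c2, c3; simpl; ring.
Qed.

Lemma vnorm_sub_sym a b : vnorm (vsub a b) = vnorm (vsub b a).
Proof. unfold vnorm, vsub, c1, c2, c3; simpl. f_equal. ring. Qed.

Lemma vnorm_scale a u : vnorm (vscale a u) = Rabs a * vnorm u.
Proof.
  unfold vnorm, vscale, c1, c2, c3; simpl.
  rewrite <- sqrt_Rsqr_abs, <- sqrt_mult_alt. f_equal. unfold Rsqr; ring.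
  apply Rle_0_sqr.
Qed.

Lemma vnorm_le_abs u : vnorm u <= Rabs (c1 u) + Rabs (c2 u) + Rabs (c3 u).
Proof.
  unfold vnorm. apply sqrt_le_of_sq.
  pose proof (Rabs_pos (c1 u)); pose proof (Rabs_pos (c2 u)); pose proof (Rabs_pos (c3 u)); lra.
  pose proof (Rabs_pos (c1 u)); pose proof (Rabs_pos (c2 u)); pose proof (Rabs_pos (c3 u)).
  rewrite <- (pow2_abs (c1 u)), <- (pow2_abs (c2 u)), <- (pow2_abs (c3 u)).
  nra.
Qed.

Lemma abs_lt x a : Rabs x < a -> - a < x < a.
Proof. intros H; destruct (Rabs_def2 x a H); lra. Qed.
Lemma abs_lt_i x a : - a < x < a -> Rabs x < a.
Proof. intros [H1 H2]; apply Rabs_def1; lra. Qed.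
Lemma abs_le x a : Rabs x <= a -> - a <= x <= a.
Proof. intros H. pose proof (Rle_abs x). pose proof (Rle_abs (-x)). rewrite Rabs_Ropp in H1. lra. Qed.

Section Traj.
Variable r2 v : R -> R3.
Hypothesis Hder : forall t, deriv3 r2 t (v t).
Hypothesis Hsup : forall t1, exists c, c < 1 /\ forall u, u <= t1 -> vnorm (v u) <= c.

Lemma deriv3_dot w t : derivable_pt_lim (fun s => dot w (r2 s)) t (dot w (v t)).
Proof.
  destruct (Hder t) as [H1 [H2 H3]]. unfold dot.
  eapply dpl_ext; [intros; reflexivity | |
    apply dpl_plus; [apply dpl_plus|];
      (apply dpl_mult; [apply dpl_const|]); eassumption].
  simpl. ring.
Qed.

Lemma r2_c1_cont t : continuity_pt (fun s => c1 (r2 s)) t.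
Proof. destruct (Hder t) as [H1 _]. eapply cpt_of_dpl; eauto. Qed.
Lemma r2_c2_cont t : continuity_pt (fun s => c2 (r2 s)) t.
Proof. destruct (Hder t) as [_ [H1 _]]. eapply cpt_of_dpl; eauto. Qed.
Lemma r2_c3_cont t : continuity_pt (fun s => c3 (r2 s)) t.
Proof. destruct (Hder t) as [_ [_ H1]]. eapply cpt_of_dpl; eauto. Qed.

Lemma lip c t1 : (forall u, u <= t1 -> vnorm (v u) <= c) ->
  forall s1 s2, s1 <= s2 -> s2 <= t1 -> vnorm (vsub (r2 s2) (r2 s1)) <= c * (s2 - s1).
Proof.
  intros Hc s1 s2 H12 H2.
  assert (Hc0 : 0 <= c) by (eapply Rle_trans; [apply vnorm_nonneg | apply (Hc t1); lra]).
  destruct (Req_dec s1 s2) as [<-|Hne].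
  - replace (vnorm (vsub (r2 s1) (r2 s1))) with 0. lra.
    unfold vnorm, vsub, c1, c2, c3; simpl. rewrite <- sqrt_0. f_equal. ring.
  - set (w := vsub (r2 s2) (r2 s1)).
    destruct (MVT_cor2 (fun s => dot w (r2 s)) (fun s => dot w (v s)) s1 s2) as [xi [Hxi Hxr]].
    + lra.
    + intros; apply deriv3_dot.
    + assert (E : dot w (r2 s2) - dot w (r2 s1) = vnorm w * vnorm w).
      { rewrite vnorm_sq. unfold w, dot, sq3, vsub, c1, c2, c3; simpl. ring. }
      rewrite E in Hxi.
      pose proof (cauchy_schwarz w (v xi)).
      pose proof (Hc xi ltac:(lra)).
      pose proof (vnorm_nonneg w). pose proof (vnorm_nonneg (v xi)).
      pose proof (Rle_abs (dot w (v xi))).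
      assert (vnorm w * vnorm w <= vnorm w * vnorm (v xi) * (s2 - s1)).
      { rewrite Hxi. apply Rmult_le_compat_r; lra. }
      assert (vnorm w * vnorm (v xi) <= vnorm w * c) by (apply Rmult_le_compat_l; lra).
      assert (vnorm w * vnorm w <= vnorm w * (c * (s2 - s1))) by nra.
      destruct (Req_dec (vnorm w) 0) as [Z|Z]. rewrite Z; apply Rmult_le_pos; lra.
      apply (Rmult_le_reg_l (vnorm w)); lra.
Qed.

Definition gf (r1 : R3) (t s : R) : R := t - s - vnorm (vsub r1 (r2 s)).

Lemma gf_mono r1 t c t1 : (forall u, u <= t1 -> vnorm (v u) <= c) ->
  forall s1 s2, s1 <= s2 -> s2 <= t1 -> gf r1 t s1 - gf r1 t s2 >= (1 - c) * (s2 - s1).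
Proof.
  intros Hc s1 s2 H12 H2. pose proof (lip c t1 Hc s1 s2 H12 H2).
  pose proof (vnorm_tri_sub r1 (r2 s2) (r2 s1)). unfold gf. lra.
Qed.

Lemma vnorm_r2_cont r1 s : continuity_pt (fun u => vnorm (vsub r1 (r2 u))) s.
Proof.
  unfold vnorm, vsub, c1, c2, c3; simpl.
  apply (cpt_comp sqrt (fun u => (fst (fst r1) - fst (fst (r2 u))) ^ 2 + (snd (fst r1) - snd (fst (r2 u))) ^ 2 + (snd r1 - snd (r2 u)) ^ 2)).
  - simpl. repeat apply cpt_plus; repeat apply cpt_mult; try apply cpt_const;
    apply cpt_minus; try apply cpt_const.
    all: first [apply r2_c1_cont | apply r2_c2_cont | apply r2_c3_cont].
  - apply continuity_pt_sqrt. simpl. repeat apply Rplus_le_le_0_compat; apply pow2_ge_0.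
Qed.

Lemma gf_cont r1 t : continuity (gf r1 t).
Proof.
  intros s. unfold gf. apply cpt_minus; [apply cpt_minus; [apply cpt_const|apply cpt_id]|].
  apply vnorm_r2_cont.
Qed.

Lemma is_ret_iff r1 t s : is_ret r2 r1 t s <-> s <= t /\ gf r1 t s = 0.
Proof. unfold is_ret, gf. split; intros [H1 H2]; split; lra. Qed.

Lemma ret_exists r1 t : exists s, is_ret r2 r1 t s.
Proof.
  destruct (Hsup t) as [c [Hc1 Hc]].
  set (N := vnorm (vsub r1 (r2 t))).
  assert (HN : 0 <= N) by apply vnorm_nonneg.
  set (L := N / (1 - c)).
  assert (HL : 0 <= L) by (unfold L; apply Rmult_le_pos; [lra | left; apply Rinv_0_lt_compat; lra]).
  assert (Hg1 : gf r1 t t <= 0) by (unfold gf; fold N; lra).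
  assert (Hg2 : gf r1 t (t - L) >= 0).
  { pose proof (gf_mono r1 t c t Hc (t - L) t ltac:(lra) ltac:(lra)).
    unfold gf at 2 in H. fold N in H. 
    assert ((1 - c) * L = N) by (unfold L; field; lra). nra. }
  destruct (IVT_cor (gf r1 t) (t - L) t (gf_cont r1 t) ltac:(lra) ltac:(nra)) as [z [Hz1 Hz2]].
  exists z. apply is_ret_iff. split; [lra | auto].
Qed.

Lemma ret_unique r1 t s1 s2 : is_ret r2 r1 t s1 -> is_ret r2 r1 t s2 -> s1 = s2.
Proof.
  intros H1 H2. apply is_ret_iff in H1; apply is_ret_iff in H2.
  destruct (Hsup t) as [c [Hc1 Hc]].
  destruct (Rle_dec s1 s2).
  - pose proof (gf_mono r1 t c t Hc s1 s2 r ltac:(lra)). nra.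
  - pose proof (gf_mono r1 t c t Hc s2 s1 ltac:(lra) ltac:(lra)). nra.
Qed.

Lemma ret_spec r1 t : is_ret r2 r1 t (ret_time r2 r1 t).
Proof. unfold ret_time. apply epsilon_spec. apply ret_exists. Qed.

Lemma ret_eq r1 t s : is_ret r2 r1 t s -> ret_time r2 r1 t = s.
Proof. intros H. eapply ret_unique; [apply ret_spec | exact H]. Qed.

End Traj.

Lemma impl1 (s A B : R -> R) A0 B0 :
  (forall h, h * A h + (s h - s 0) * B h = 0) ->
  continuity_pt A 0 -> A 0 = A0 -> continuity_pt B 0 -> B 0 = B0 -> B0 <> 0 ->
  derivable_pt_lim s 0 (- A0 / B0).
Proof.
  intros Hid HA HA0 HB HB0 HBn eps Heps.
  assert (Hq : continuity_pt (fun h => - A h * / B h) 0).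
  { apply cpt_mult. apply (cpt_comp (fun z => - z) A). auto.
    apply continuity_pt_opp, cpt_id. apply cpt_inv; auto. congruence. }
  destruct (cpt_elim _ _ Hq eps Heps) as [d1 [Hd1 H1]].
  assert (HBa : Rabs B0 > 0) by (apply Rabs_pos_lt; auto).
  destruct (cpt_elim _ _ HB (Rabs B0) HBa) as [d2 [Hd2 H2]].
  assert (Hd : 0 < Rmin d1 d2) by (apply Rmin_pos; auto).
  exists (mkposreal _ Hd). intros h Hh0 Hh. simpl in Hh.
  assert (Hh1 : Rabs (h - 0) < d1) by (rewrite Rminus_0_r; eapply Rlt_le_trans; [exact Hh| apply Rmin_l]).
  assert (Hh2 : Rabs (h - 0) < d2) by (rewrite Rminus_0_r; eapply Rlt_le_trans; [exact Hh| apply Rmin_r]).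
  specialize (H1 h Hh1). specialize (H2 h Hh2).
  assert (HBh : B h <> 0).
  { intros Z. rewrite Z, HB0 in H2. rewrite Rminus_0_l, Rabs_Ropp in H2. lra. }
  replace ((s (0 + h) - s 0) / h) with (- A h * / B h).
  - rewrite HA0, HB0 in H1. unfold Rdiv. exact H1.
  - rewrite Rplus_0_l. specialize (Hid h). field_simplify_eq; auto.
    nra.
Qed.

Lemma divdiff_cont f a l :
  derivable_pt_lim f a l ->
  continuity_pt (fun u => if Req_EM_T u a then l else (f u - f a) / (u - a)) a.
Proof.
  intros H. apply cpt_intro. intros eps Heps.
  destruct (H eps Heps) as [d Hd]. exists d; split; [apply cond_pos|].
  intros y Hy. destruct (Req_EM_T a a) as [_|C]; [|congruence].
  destruct (Req_EM_T y a) as [->|Hne].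
  - unfold Rminus; rewrite Rplus_opp_r, Rabs_R0; auto.
  - specialize (Hd (y - a) ltac:(lra) Hy). replace (a + (y - a)) with y in Hd by ring. exact Hd.
Qed.

Section TauCont.
Variable r2 v : R -> R3.
Hypothesis Hder : forall t, deriv3 r2 t (v t).
Hypothesis Hsup : forall t1, exists c, c < 1 /\ forall u, u <= t1 -> vnorm (v u) <= c.

Lemma vnorm_diff a b x : Rabs (vnorm (vsub a x) - vnorm (vsub b x)) <= vnorm (vsub a b).
Proof.
  pose proof (vnorm_tri_sub a b x). pose proof (vnorm_tri_sub b a x).
  rewrite (vnorm_sub_sym b a) in H0. apply Rabs_le; lra.
Qed.

Lemma tau_cont_gen r1 t eps : eps > 0 -> exists d, d > 0 /\
  forall r1' t', vnorm (vsub r1' r1) < d -> Rabs (t' - t) < d ->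
  Rabs (ret_time r2 r1' t' - ret_time r2 r1 t) < eps.
Proof.
  intros Heps. destruct (Hsup (t + 1)) as [c [Hc1 Hc]].
  exists (Rmin 1 (eps * (1 - c) / 2)). split.
  { apply Rmin_pos; [lra|]. apply Rmult_lt_0_compat; [|lra]. apply Rmult_lt_0_compat; lra. }
  intros r1' t' Hr Ht.
  pose proof (Rmin_l 1 (eps * (1 - c) / 2)). pose proof (Rmin_r 1 (eps * (1 - c) / 2)).
  set (s := ret_time r2 r1 t). set (s' := ret_time r2 r1' t').
  pose proof (ret_spec r2 v Hder Hsup r1 t) as Hs. fold s in Hs.
  pose proof (ret_spec r2 v Hder Hsup r1' t') as Hs'. fold s' in Hs'.
  apply (is_ret_iff r2) in Hs; apply (is_ret_iff r2) in Hs'.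
  destruct Hs as [Hs1 Hs2]; destruct Hs' as [Hs1' Hs2'].
  apply abs_lt in Ht.
  assert (Hg : Rabs (gf r2 r1 t s') < 2 * Rmin 1 (eps * (1 - c) / 2)).
  { replace (gf r2 r1 t s') with (gf r2 r1 t s' - gf r2 r1' t' s') by lra.
    unfold gf. pose proof (vnorm_diff r1' r1 (r2 s')).
    apply abs_lt_i. apply abs_le in H1.
    split; lra. }
  assert (Hm : Rabs (gf r2 r1 t s - gf r2 r1 t s') >= (1 - c) * Rabs (s' - s)).
  { destruct (Rle_dec s s').
    - pose proof (gf_mono r2 v Hder r1 t c (t + 1) Hc s s' r ltac:(lra)).
      assert (0 <= (1-c)*(s' - s)) by (apply Rmult_le_pos; lra). rewrite Rabs_pos_eq by lra. rewrite Rabs_pos_eq by lra. lra.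
    - pose proof (gf_mono r2 v Hder r1 t c (t + 1) Hc s' s ltac:(lra) ltac:(lra)).
      assert (0 <= (1-c)*(s - s')) by (apply Rmult_le_pos; lra). rewrite (Rabs_left (s' - s)) by lra. rewrite Rabs_minus_sym. rewrite Rabs_pos_eq by lra. lra. }
  rewrite Hs2, Rminus_0_l, Rabs_Ropp in Hm.

  apply (Rmult_lt_reg_l (1 - c)); [lra|].
  assert ((1 - c) * eps = 2 * (eps * (1 - c) / 2)) by field. lra.
Qed.

End TauCont.

Section TauDeriv.
Variable r2 v : R -> R3.
Hypothesis Hder : forall t, deriv3 r2 t (v t).
Hypothesis Hsup : forall t1, exists c, c < 1 /\ forall u, u <= t1 -> vnorm (v u) <= c.

Lemma vadd_scale0 r1 dr : vadd r1 (vscale 0 dr) = r1.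
Proof. destruct r1 as [[a b] c]. unfold vadd, vscale, c1, c2, c3; simpl. f_equal; [f_equal|]; ring. Qed.

Lemma s_cont r1 t dr dt :
  continuity_pt (fun h => ret_time r2 (vadd r1 (vscale h dr)) (t + h * dt)) 0.
Proof.
  apply cpt_intro. intros eps Heps.
  destruct (tau_cont_gen r2 v Hder Hsup r1 t eps Heps) as [d [Hd Hc]].
  set (K := vnorm dr + Rabs dt + 1).
  assert (HK : K > 0) by (unfold K; pose proof (vnorm_nonneg dr); pose proof (Rabs_pos dt); lra).
  exists (d / K). split. apply Rdiv_lt_0_compat; lra.
  intros h Hh. rewrite Rminus_0_r in Hh.
  rewrite Rmult_0_l, Rplus_0_r, vadd_scale0.
  assert (HhK : Rabs h * K < d).
  { apply (Rmult_lt_compat_r K) in Hh; auto. unfold Rdiv in Hh. rewrite Rmult_assoc, Rinv_l in Hh; lra. }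
  apply Hc.
  - replace (vnorm (vsub (vadd r1 (vscale h dr)) r1)) with (vnorm (vscale h dr)).
    + rewrite vnorm_scale. pose proof (vnorm_nonneg dr); pose proof (Rabs_pos h); pose proof (Rabs_pos dt). unfold K in HhK. nra.
    + apply vnorm_ext; unfold vsub, vadd, vscale, c1, c2, c3; simpl; ring.
  - replace (t + h * dt - t) with (h * dt) by ring. rewrite Rabs_mult.
    pose proof (vnorm_nonneg dr); pose proof (Rabs_pos h); pose proof (Rabs_pos dt). unfold K in HhK. nra.
Qed.

Definition H0f (r1 : R3) (t s : R) := (t - s) ^ 2 - sq3 (vsub r1 (r2 s)).

Lemma H0f_deriv r1 t s : derivable_pt_lim (H0f r1 t) s
   (-2 * (t - s) + 2 * dot (vsub r1 (r2 s)) (v s)).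
Proof.
  destruct (Hder s) as [H1 [H2 H3]]. unfold H0f, sq3, vsub, c1, c2, c3 in *; simpl in *.
  eapply dpl_ext; [intros; simpl; reflexivity | |].
  2:{ apply dpl_minus. 
      - apply (dpl_comp (fun z => z ^ 2) (fun y => t - y)). apply dpl_minus; [apply dpl_const | apply dpl_id].
        apply derivable_pt_lim_pow.
      - apply dpl_plus; [apply dpl_plus|];
        (apply (dpl_comp (fun z => z ^ 2)); [apply dpl_minus; [apply dpl_const | eassumption] | apply derivable_pt_lim_pow]). }
  unfold dot, vsub, c1, c2, c3; simpl. ring.
Qed.

Lemma tau_line r1 t dr dt :
  t - ret_time r2 r1 t > 0 ->
  let s0 := ret_time r2 r1 t in
  let T := t - s0 in
  let w := vsub r1 (r2 s0) in
  let Dn := T - dot w (v s0) in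
  Dn > 0 /\
  derivable_pt_lim (fun h => ret_time r2 (vadd r1 (vscale h dr)) (t + h * dt)) 0
    ((dt * T - dot dr w) / Dn).
Proof.
  intros HT s0 T w Dn.
  pose proof (ret_spec r2 v Hder Hsup r1 t) as Hs0. fold s0 in Hs0.
  assert (HTw : T = vnorm w) by (destruct Hs0; unfold T, w; lra).
  assert (HDn : Dn > 0).
  { destruct (Hsup s0) as [c [Hc1 Hc]]. pose proof (Hc s0 (Rle_refl _)).
    pose proof (cauchy_schwarz w (v s0)). pose proof (Rle_abs (dot w (v s0))).
    pose proof (vnorm_nonneg (v s0)).
    assert (Hw : vnorm w > 0) by (rewrite <- HTw; unfold T, s0; lra).
    assert (vnorm w * vnorm (v s0) < vnorm w * 1) by (apply Rmult_lt_compat_l; lra).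
    unfold Dn. rewrite HTw. lra. }
  split; auto.
  set (s := fun h => ret_time r2 (vadd r1 (vscale h dr)) (t + h * dt)).
  assert (Hs0' : s 0 = s0) by (unfold s; rewrite vadd_scale0, Rmult_0_l, Rplus_0_r; reflexivity).
  set (Bd := -2 * (t - s0) + 2 * dot w (v s0)).
  set (Bf := fun u => if Req_EM_T u s0 then Bd else (H0f r1 t u - H0f r1 t s0) / (u - s0)).
  set (A := fun h => dt * (2 * (t - s h) + h * dt)
        - (c1 dr * (2 * (c1 r1 - c1 (r2 (s h))) + h * c1 dr)
         + c2 dr * (2 * (c2 r1 - c2 (r2 (s h))) + h * c2 dr)
         + c3 dr * (2 * (c3 r1 - c3 (r2 (s h))) + h * c3 dr))).
  assert (HH0 : H0f r1 t s0 = 0).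
  { unfold H0f. rewrite <- vnorm_sq. fold w. rewrite <- HTw. unfold T. ring. }
  assert (HBf : forall u, H0f r1 t u - H0f r1 t s0 = (u - s0) * Bf u).
  { intros u. unfold Bf. destruct (Req_EM_T u s0) as [->|Hne]. ring. field. lra. }
  assert (Hid : forall h, h * A h + (s h - s 0) * Bf (s h) = 0).
  { intros h. rewrite Hs0', <- HBf, HH0.
    pose proof (ret_spec r2 v Hder Hsup (vadd r1 (vscale h dr)) (t + h * dt)) as Hsh.
    fold (s h) in Hsh. destruct Hsh as [_ Hsh].
    assert (E : (t + h * dt - s h) ^ 2 = sq3 (vsub (vadd r1 (vscale h dr)) (r2 (s h)))).
    { rewrite <- vnorm_sq. replace (t + h * dt - s h) with (vnorm (vsub (vadd r1 (vscale h dr)) (r2 (s h)))) by lra. ring. }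
    unfold A, H0f. unfold sq3, vsub, vadd, vscale, c1, c2, c3 in *; simpl in *. rewrite Rminus_0_r. nra. }
  assert (Hsc : continuity_pt s 0) by apply s_cont.
  assert (HAc : continuity_pt A 0).
  { unfold A. assert (Hr : forall (f : R3 -> R), (forall u, continuity_pt (fun z => f (r2 z)) u) -> continuity_pt (fun h => f (r2 (s h))) 0).
    { intros f Hf. apply (cpt_comp (fun z => f (r2 z)) s); auto. }
    repeat first [apply cpt_minus | apply cpt_plus | apply cpt_mult | apply cpt_const | apply cpt_id | exact Hsc].
    all: apply Hr; intros u; first [apply (r2_c1_cont r2 v Hder) | apply (r2_c2_cont r2 v Hder) | apply (r2_c3_cont r2 v Hder)]. }
  assert (HBc : continuity_pt (fun h => Bf (s h)) 0).
  { apply (cpt_comp Bf s); auto. rewrite Hs0'. apply divdiff_cont. apply H0f_deriv. }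
  pose proof (impl1 s A (fun h => Bf (s h)) (2 * dt * T - 2 * dot dr w) (-2 * Dn) Hid HAc) as K.
  eapply dpl_ext; [intros; reflexivity | | apply K].
  - field. lra.
  - unfold A. rewrite Hs0'. unfold T, w, dot, vsub, c1, c2, c3; simpl. ring.
  - exact HBc.
  - rewrite Hs0'. unfold Bf. destruct (Req_EM_T s0 s0) as [_|C]; [|congruence]. unfold Bd, Dn, T. ring.
  - lra.
Qed.

End TauDeriv.

Definition contAt {n : nat} (f : (Fin.t n -> R) -> R) (x : Fin.t n -> R) : Prop :=
  forall eps, eps > 0 -> exists d, d > 0 /\
    forall y, (forall i, Rabs (y i - x i) < d) -> Rabs (f y - f x) < eps.

Lemma contAt_const {n} (a : R) (x : Fin.t n -> R) : contAt (fun _ => a) x.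
Proof. intros eps He; exists 1; split; [lra|]; intros; unfold Rminus; rewrite Rplus_opp_r, Rabs_R0; auto. Qed.

Lemma contAt_coord {n} (j : Fin.t n) x : contAt (fun y => y j) x.
Proof. intros eps He; exists eps; split; auto. Qed.

Lemma contAt_add {n} (f g : (Fin.t n -> R) -> R) x : contAt f x -> contAt g x -> contAt (fun y => f y + g y) x.
Proof.
  intros Hf Hg eps He.
  destruct (Hf (eps/2) ltac:(lra)) as [d1 [Hd1 H1]]. destruct (Hg (eps/2) ltac:(lra)) as [d2 [Hd2 H2]].
  exists (Rmin d1 d2). split. apply Rmin_pos; auto.
  intros y Hy.
  assert (A1 : forall i, Rabs (y i - x i) < d1) by (intros i; eapply Rlt_le_trans; [apply Hy|apply Rmin_l]).
  assert (A2 : forall i, Rabs (y i - x i) < d2) by (intros i; eapply Rlt_le_trans; [apply Hy|apply Rmin_r]).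
  specialize (H1 y A1); specialize (H2 y A2).
  replace (f y + g y - (f x + g x)) with ((f y - f x) + (g y - g x)) by ring.
  eapply Rle_lt_trans; [apply Rabs_triang|]. lra.
Qed.

Lemma contAt_comp {n} (phi : R -> R) (f : (Fin.t n -> R) -> R) x :
  contAt f x -> continuity_pt phi (f x) -> contAt (fun y => phi (f y)) x.
Proof.
  intros Hf Hp eps He.
  destruct (cpt_elim phi (f x) Hp eps He) as [d1 [Hd1 H1]].
  destruct (Hf d1 Hd1) as [d [Hd H]]. exists d; split; auto.
Qed.

Lemma contAt_ext {n} (f g : (Fin.t n -> R) -> R) x : (forall y, f y = g y) -> contAt f x -> contAt g x.
Proof. intros E H eps He. destruct (H eps He) as [d [Hd Hy]]. exists d; split; auto. intros y Hy'. rewrite <- !E. auto. Qed.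

Lemma contAt_mul {n} (f g : (Fin.t n -> R) -> R) x : contAt f x -> contAt g x -> contAt (fun y => f y * g y) x.
Proof.
  intros Hf Hg.
  apply (contAt_ext (fun y => /4 * ((f y + g y) ^ 2 + (-1) * (f y + (-1) * g y) ^ 2))).
  { intros y; field. }
  apply (contAt_comp (fun z => /4 * z)).
  2:{ apply cpt_mult; [apply cpt_const | apply cpt_id]. }
  apply contAt_add.
  - apply (contAt_comp (fun z => z ^ 2)). apply contAt_add; auto.
    apply derivable_continuous_pt, derivable_pt_pow.
  - apply (contAt_comp (fun z => (-1) * z ^ 2)).
    + apply contAt_add; auto. apply (contAt_comp (fun z => (-1) * z)); auto.
      apply cpt_mult; [apply cpt_const | apply cpt_id].
    + apply cpt_mult; [apply cpt_const|]. apply derivable_continuous_pt, derivable_pt_pow.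
Qed.

Lemma shift0 {n} (x : Fin.t n -> R) i : shift x i 0 = x.
Proof. apply functional_extensionality; intros j; unfold shift. destruct (Fin.eq_dec i j); ring. Qed.

Lemma shift_val {n} (x : Fin.t n -> R) i h j : shift x i h j = x j + h * (if Fin.eq_dec i j then 1 else 0).
Proof. unfold shift. destruct (Fin.eq_dec i j); ring. Qed.

Inductive E (n : nat) : Type :=
| Cst (r : R) | Crd (j : Fin.t n) | Tau | Fn (c m : nat) (e : E n)
| Add (a b : E n) | Mul (a b : E n) | Inv (a : E n).
Arguments Cst {n} r. Arguments Crd {n} j. Arguments Tau {n}. Arguments Fn {n} c m e.
Arguments Add {n} a b. Arguments Mul {n} a b. Arguments Inv {n} a.

Section Frame.
Variable n : nat.
Variable D : nat -> nat -> R -> R.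
Variable tauF : (Fin.t n -> R) -> R.
Variable dtau : Fin.t n -> E n.
Variable U : (Fin.t n -> R) -> Prop.
Variable N : nat.

Fixpoint eval (e : E n) (x : Fin.t n -> R) : R :=
  match e with
  | Cst r => r
  | Crd j => x j
  | Tau => tauF x
  | Fn c m e => D c m (eval e x)
  | Add a b => eval a x + eval b x
  | Mul a b => eval a x * eval b x
  | Inv a => / eval a x
  end.

Fixpoint dE (i : Fin.t n) (e : E n) : E n :=
  match e with
  | Cst _ => Cst 0
  | Crd j => Cst (if Fin.eq_dec i j then 1 else 0)
  | Tau => dtau i
  | Fn c m e => Mul (Fn c (S m) e) (dE i e)
  | Add a b => Add (dE i a) (dE i b)
  | Mul a b => Add (Mul (dE i a) b) (Mul a (dE i b))
  | Inv a => Mul (Cst (-1)) (Mul (dE i a) (Mul (Inv a) (Inv a)))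
  end.

Fixpoint maxord (e : E n) : nat :=
  match e with
  | Cst _ | Crd _ | Tau => 0%nat
  | Fn c m e => Nat.max m (maxord e)
  | Add a b | Mul a b => Nat.max (maxord a) (maxord b)
  | Inv a => maxord a
  end.

Fixpoint okE (e : E n) : Prop :=
  match e with
  | Cst _ | Crd _ | Tau => True
  | Fn c m e => okE e
  | Add a b | Mul a b => okE a /\ okE b
  | Inv a => okE a /\ forall x, U x -> eval a x <> 0
  end.

Hypothesis HD : forall c m, (m < N)%nat -> forall s, derivable_pt_lim (D c m) s (D c (S m) s).
Hypothesis HDc : forall c m, (m <= N)%nat -> continuity (D c m).
Hypothesis Htc : forall x, U x -> contAt tauF x.
Hypothesis Htd : forall x i, U x -> derivable_pt_lim (fun h => tauF (shift x i h)) 0 (eval (dtau i) x).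
Hypothesis Hok : forall i, okE (dtau i).
Hypothesis Hmo : forall i, (maxord (dtau i) <= 1)%nat.

Lemma eval_cont e : okE e -> (maxord e <= N)%nat -> forall x, U x -> contAt (eval e) x.
Proof.
  induction e; simpl; intros Hk Hm x Ux.
  - apply contAt_const.
  - apply contAt_coord.
  - apply Htc; auto.
  - apply (contAt_comp (D c m) (eval e)). apply IHe; auto; lia. apply HDc; lia.
  - destruct Hk. apply contAt_add; [apply IHe1 | apply IHe2]; auto; lia.
  - destruct Hk. apply contAt_mul; [apply IHe1 | apply IHe2]; auto; lia.
  - destruct Hk as [Hk Hnz]. apply (contAt_comp (fun z => / z) (eval e)). apply IHe; auto.
    apply cpt_inv. apply cpt_id. apply Hnz; auto.
Qed.

Lemma dE_maxord i e : (maxord (dE i e) <= S (maxord e))%nat.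
Proof. pose proof (Hmo i). induction e; cbn [maxord dE]; lia. Qed.

Lemma dE_ok i e : okE e -> okE (dE i e).
Proof. induction e; simpl; intros; try tauto. apply Hok. Qed.

Lemma eval_deriv e x i : okE e -> (maxord e < N)%nat -> U x ->
  derivable_pt_lim (fun h => eval e (shift x i h)) 0 (eval (dE i e) x).
Proof.
  revert x. induction e; simpl; intros x Hk Hm Ux.
  - apply dpl_const.
  - unfold shift. destruct (Fin.eq_dec i j).
    + eapply dpl_ext; [intros; reflexivity | | apply dpl_plus; [apply dpl_const | apply dpl_id]]. ring.
    + apply dpl_const.
  - apply Htd; auto.
  - assert (K : derivable_pt_lim (fun h => D c m (eval e (shift x i h))) 0 (D c (S m) (eval e x) * eval (dE i e) x)).
    { apply dpl_comp. apply IHe; auto; lia. rewrite shift0. apply HD; lia. }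
    exact K.
  - destruct Hk. eapply dpl_ext; [intros; reflexivity | reflexivity |].
    apply dpl_plus; [apply IHe1 | apply IHe2]; auto; lia.
  - destruct Hk. eapply dpl_ext; [intros; reflexivity | |].
    2:{ apply dpl_mult; [apply IHe1 | apply IHe2]; auto; lia. }
    simpl. rewrite shift0. ring.
  - destruct Hk as [Hk Hnz]. eapply dpl_ext; [intros; reflexivity | |].
    2:{ apply dpl_inv. apply IHe; auto. simpl. rewrite shift0. apply Hnz; auto. }
    simpl. rewrite shift0. field. apply Hnz; auto.
Qed.

Lemma cont_on_of (f : (Fin.t n -> R) -> R) : (forall x, U x -> contAt f x) -> cont_on U f.
Proof.
  intros H x Ux eps He. destruct (H x Ux eps He) as [d [Hd Hy]]. exists d; split; auto.
Qed.

Lemma eval_Ck k : forall e, okE e -> (maxord e + k <= N)%nat -> Ck k U (eval e).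
Proof.
  induction k; intros e Hk Hm.
  - simpl. apply cont_on_of. apply eval_cont; auto; lia.
  - simpl. split.
    + apply cont_on_of. apply eval_cont; auto; lia.
    + intros i. exists (eval (dE i e)). split.
      * intros x Ux. apply eval_deriv; auto. lia.
      * apply IHk. apply dE_ok; auto. pose proof (dE_maxord i e). lia.
Qed.

End Frame.

Lemma Ck_ext {n} k (U : (Fin.t n -> R) -> Prop) f g : (forall x, f x = g x) -> Ck k U f -> Ck k U g.
Proof.
  intros E. replace g with f; auto. apply functional_extensionality; auto.
Qed.

Definition compc (c : nat) (u : R3) : R :=
  match c with 0%nat => c1 u | 1%nat => c2 u | _ => c3 u end.

Notation f0 := (@Fin.F1 3).
Notation f1 := (Fin.FS (@Fin.F1 2)).
Notation f2 := (Fin.FS (Fin.FS (@Fin.F1 1))).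
Notation f3 := (Fin.FS (Fin.FS (Fin.FS (@Fin.F1 0)))).

Definition dl {n} (i j : Fin.t n) : R := if Fin.eq_dec i j then 1 else 0.

Definition Tdel : E 4 := Add (Crd f3) (Mul (Cst (-1)) Tau).
Definition Wc (c : nat) (j : Fin.t 4) : E 4 := Add (Crd j) (Mul (Cst (-1)) (Fn c 0 Tau)).
Definition DnE : E 4 := Add Tdel (Mul (Cst (-1))
  (Add (Add (Mul (Wc 0 f0) (Fn 0 1 Tau)) (Mul (Wc 1 f1) (Fn 1 1 Tau))) (Mul (Wc 2 f2) (Fn 2 1 Tau)))).
Definition dtau4 (i : Fin.t 4) : E 4 :=
  Mul (Add (Mul (Cst (dl i f3)) Tdel) (Mul (Cst (-1))
        (Add (Add (Mul (Cst (dl i f0)) (Wc 0 f0)) (Mul (Cst (dl i f1)) (Wc 1 f1))) (Mul (Cst (dl i f2)) (Wc 2 f2)))))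
      (Inv DnE).

Section Phi.
Variable r2 v : R -> R3.
Hypothesis Hder : forall t, deriv3 r2 t (v t).
Hypothesis Hsup : forall t1, exists c, c < 1 /\ forall u, u <= t1 -> vnorm (v u) <= c.
Variable D : nat -> nat -> R -> R.
Hypothesis HD0 : forall c s, D c 0%nat s = compc c (r2 s).
Hypothesis HD1 : forall c s, D c 1%nat s = compc c (v s).

Definition tauF4 (x : Fin.t 4 -> R) : R := ret_time r2 (fst (dec4 x)) (snd (dec4 x)).

Lemma tauF4_cont x : contAt tauF4 x.
Proof.
  intros eps He. destruct (tau_cont_gen r2 v Hder Hsup (fst (dec4 x)) (snd (dec4 x)) eps He) as [d [Hd Hc]].
  exists (d / 3). split; [lra|]. intros y Hy. unfold tauF4. apply Hc.
  - eapply Rle_lt_trans; [apply vnorm_le_abs|].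
    unfold dec4, vsub, c1, c2, c3; simpl.
    pose proof (Hy f0); pose proof (Hy f1); pose proof (Hy f2). lra.
  - unfold dec4; simpl. pose proof (Hy f3). lra.
Qed.

Lemma eval_Tdel x : eval 4 D tauF4 Tdel x = delay r2 (fst (dec4 x)) (snd (dec4 x)).
Proof. unfold Tdel, delay; simpl. unfold tauF4, dec4; simpl. ring. Qed.

Lemma eval_DnE x : eval 4 D tauF4 DnE x =
  let s0 := ret_time r2 (fst (dec4 x)) (snd (dec4 x)) in
  (snd (dec4 x) - s0) - dot (vsub (fst (dec4 x)) (r2 s0)) (v s0).
Proof.
  unfold DnE, Tdel, Wc; simpl. rewrite !HD0, !HD1. unfold tauF4, dot, vsub, dec4, compc, c1, c2, c3; simpl. ring.
Qed.

Lemma tauF4_line x i : G4 r2 x ->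
  eval 4 D tauF4 DnE x > 0 /\
  derivable_pt_lim (fun h => tauF4 (shift x i h)) 0 (eval 4 D tauF4 (dtau4 i) x).
Proof.
  intros Gx. unfold G4, inG, delay in Gx.
  destruct (tau_line r2 v Hder Hsup (fst (dec4 x)) (snd (dec4 x)) (dl i f0, dl i f1, dl i f2) (dl i f3) Gx) as [Hp K].
  rewrite eval_DnE. split; [exact Hp|].
  eapply dpl_ext; [ | | exact K].
  - intros h. unfold tauF4. f_equal.
    + unfold dec4, vadd, vscale, c1, c2, c3; simpl. rewrite !shift_val. reflexivity.
    + unfold dec4; simpl. rewrite shift_val. reflexivity.
  - unfold dtau4. cbn [eval]. fold (eval 4 D tauF4 DnE x). rewrite eval_DnE.
    unfold Tdel, Wc. cbn [eval]. rewrite !HD0.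
    unfold tauF4, dot, vsub, dec4, compc, c1, c2, c3 in *; simpl in *. field. lra.
Qed.

Lemma dtau4_ok i : okE 4 D tauF4 (G4 r2) (dtau4 i).
Proof.
  unfold dtau4, DnE, Tdel, Wc. cbn [okE]. repeat split; auto.
  intros x Gx. destruct (tauF4_line x i Gx) as [H _]. unfold DnE, Tdel, Wc in H. lra.
Qed.

Lemma dtau4_ord i : (maxord 4 (dtau4 i) <= 1)%nat.
Proof. unfold dtau4. simpl. lia. Qed.

Variable N : nat.
Hypothesis HD : forall c m, (m < N)%nat -> forall s, derivable_pt_lim (D c m) s (D c (S m) s).
Hypothesis HDc : forall c m, (m <= N)%nat -> continuity (D c m).

Lemma phiV_Ck k : (k <= N)%nat -> CkMap k (G4 r2) (phiV r2).
Proof.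
  intros Hk j.
  assert (GEN : forall e, okE 4 D tauF4 (G4 r2) e -> maxord 4 e = 0%nat -> Ck k (G4 r2) (eval 4 D tauF4 e)).
  { intros e He Hm. apply (eval_Ck 4 D tauF4 dtau4 (G4 r2) N HD HDc (fun x _ => tauF4_cont x)
      (fun x i Gx => proj2 (tauF4_line x i Gx)) dtau4_ok dtau4_ord k e He). lia. }
  assert (Tpos : forall x, G4 r2 x -> eval 4 D tauF4 Tdel x <> 0).
  { intros x Gx. rewrite eval_Tdel. unfold G4, inG in Gx. lra. }
  assert (EDIR : forall c (jj : Fin.t 4), Ck k (G4 r2) (eval 4 D tauF4 (Mul (Inv Tdel) (Wc c jj)))).
  { intros c jj. apply GEN. cbn [okE]. split; [split; [unfold Tdel; cbn [okE]; tauto | intros x Gx; apply Tpos; auto] | unfold Wc; cbn [okE]; tauto].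
    unfold Tdel, Wc; simpl. lia. }
  repeat (apply (Fin.caseS' j); [| clear j; intros j]); [ | | | | | destruct (Fin.case0 (fun _ => False) j)].
  - apply (Ck_ext k _ (eval 4 D tauF4 Tau)). intros x; reflexivity. apply GEN; simpl; auto.
  - apply (Ck_ext k _ (eval 4 D tauF4 Tdel)). intros x; rewrite eval_Tdel; reflexivity.
    apply GEN; unfold Tdel; simpl; auto.
  - refine (Ck_ext k _ _ _ _ (EDIR 0%nat f0)). intros x. unfold Wc. cbn [eval]. rewrite eval_Tdel.
    unfold phiV, enc5, of_list; simpl. rewrite HD0. unfold edir, vscale, vsub, delay, tauF4, dec4, compc, c1, c2, c3; simpl. ring.
  - refine (Ck_ext k _ _ _ _ (EDIR 1%nat f1)). intros x. unfold Wc. cbn [eval]. rewrite eval_Tdel.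
    unfold phiV, enc5, of_list; simpl. rewrite HD0. unfold edir, vscale, vsub, delay, tauF4, dec4, compc, c1, c2, c3; simpl. ring.
  - refine (Ck_ext k _ _ _ _ (EDIR 2%nat f2)). intros x. unfold Wc. cbn [eval]. rewrite eval_Tdel.
    unfold phiV, enc5, of_list; simpl. rewrite HD0. unfold edir, vscale, vsub, delay, tauF4, dec4, compc, c1, c2, c3; simpl. ring.
Qed.

End Phi.

Notation g0 := (@Fin.F1 4).
Notation g1 := (Fin.FS (@Fin.F1 3)).
Notation g2 := (Fin.FS (Fin.FS (@Fin.F1 2))).
Notation g3 := (Fin.FS (Fin.FS (Fin.FS (@Fin.F1 1)))).
Notation g4 := (Fin.FS (Fin.FS (Fin.FS (Fin.FS (@Fin.F1 0))))).

Section Psi.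
Variable r2 : R -> R3.
Variable D : nat -> nat -> R -> R.
Hypothesis HD0 : forall c s, D c 0%nat s = compc c (r2 s).
Variable N : nat.
Hypothesis HD : forall c m, (m < N)%nat -> forall s, derivable_pt_lim (D c m) s (D c (S m) s).
Hypothesis HDc : forall c m, (m <= N)%nat -> continuity (D c m).

Definition tau0 (y : Fin.t 5 -> R) : R := 0.

Lemma psiV_Ck k : (k <= N)%nat -> CkMap k (fun _ => True) (psiV r2).
Proof.
  intros Hk j.
  assert (GEN : forall e, okE 5 D tau0 (fun _ => True) e -> maxord 5 e = 0%nat -> Ck k (fun _ => True) (eval 5 D tau0 e)).
  { intros e He Hm. apply (eval_Ck 5 D tau0 (fun _ => Cst 0) (fun _ => True) N HD HDc
      (fun x _ => contAt_const 0 x) (fun x i _ => dpl_const 0 0) (fun i => I) (fun i => le_S _ _ (le_n 0)) k e He). lia. }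
  repeat (apply (Fin.caseS' j); [| clear j; intros j]); [ | | | | destruct (Fin.case0 (fun _ => False) j)].
  - refine (Ck_ext k _ _ _ _ (GEN (Add (Fn 0 0 (Crd g0)) (Mul (Crd g1) (Crd g2))) ltac:(simpl; tauto) ltac:(reflexivity))).
    intros x. simpl. rewrite HD0. unfold psiV, enc4, of_list; simpl. reflexivity.
  - refine (Ck_ext k _ _ _ _ (GEN (Add (Fn 1 0 (Crd g0)) (Mul (Crd g1) (Crd g3))) ltac:(simpl; tauto) ltac:(reflexivity))).
    intros x. simpl. rewrite HD0. unfold psiV, enc4, of_list; simpl. reflexivity.
  - refine (Ck_ext k _ _ _ _ (GEN (Add (Fn 2 0 (Crd g0)) (Mul (Crd g1) (Crd g4))) ltac:(simpl; tauto) ltac:(reflexivity))).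
    intros x. simpl. rewrite HD0. unfold psiV, enc4, of_list; simpl. reflexivity.
  - refine (Ck_ext k _ _ _ _ (GEN (Add (Crd g0) (Crd g1)) ltac:(simpl; tauto) ltac:(reflexivity))).
    intros x. unfold psiV, enc4, of_list; simpl. reflexivity.
Qed.

Lemma psiV_Ck_sub k : (k <= N)%nat -> CkMap_on_subset k G1_5 (psiV r2).
Proof.
  intros Hk y _. exists (fun _ => True), (psiV r2). split; [|split; [exact I| split]].
  - intros x _. exists 1. split; [lra|]. auto.
  - apply psiV_Ck; auto.
  - auto.
Qed.

End Psi.

Definition deps (g : R -> R) (x : R) : R := epsilon (inhabits 0) (fun l => derivable_pt_lim g x l).

Lemma deps_ok g : (forall k, CkR k g) -> (forall x, derivable_pt_lim g x (deps g x)) /\ (forall k, CkR k (deps g)).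
Proof.
  intros H.
  assert (Hd : forall x, derivable_pt_lim g x (deps g x)).
  { intros x. unfold deps. apply epsilon_spec. destruct (H 1%nat) as [g' [Hg' _]]. exists (g' x); auto. }
  split; auto. intros k. destruct (H (S k)) as [g' [Hg' Hk]].
  replace (deps g) with g'; auto. apply functional_extensionality. intros x.
  eapply uniqueness_limite; eauto.
Qed.

Fixpoint seqD (f : R -> R) (m : nat) : R -> R :=
  match m with 0%nat => f | S m' => deps (seqD f m') end.

Lemma seqD_ok f : (forall k, CkR k f) -> forall m, (forall k, CkR k (seqD f m)) /\
  (forall x, derivable_pt_lim (seqD f m) x (seqD f (S m) x)).
Proof.
  intros H. induction m.
  - split; auto. apply deps_ok; auto.
  - destruct IHm as [IH _]. destruct (deps_ok _ IH) as [_ H2]. split; [exact H2|].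
    apply deps_ok. exact H2.
Qed.

Section Bij.
Variable r2 v : R -> R3.
Hypothesis Hder : forall t, deriv3 r2 t (v t).
Hypothesis Hsup : forall t1, exists c, c < 1 /\ forall u, u <= t1 -> vnorm (v u) <= c.

Lemma vnorm_w r1 t : vnorm (vsub r1 (r2 (ret_time r2 r1 t))) = delay r2 r1 t.
Proof. destruct (ret_spec r2 v Hder Hsup r1 t) as [_ H]. unfold delay. lra. Qed.

Lemma bij1 r1 t : inG r2 r1 t -> inG1 (phi r2 r1 t).
Proof.
  intros HG. unfold inG in HG. unfold inG1, phi; simpl. split; auto.
  unfold edir. rewrite vnorm_scale, vnorm_w. rewrite Rabs_pos_eq.
  field. lra. left. apply Rinv_0_lt_compat. lra.
Qed.

Lemma bij2 p : inG1 p -> inG r2 (fst (psi r2 p)) (snd (psi r2 p)) /\ phi r2 (fst (psi r2 p)) (snd (psi r2 p)) = p.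
Proof.
  destruct p as [[tau T] e]. unfold inG1; simpl. intros [HT He].
  assert (Hr : is_ret r2 (vadd (r2 tau) (vscale T e)) (tau + T) tau).
  { split; [lra|]. replace (vnorm (vsub (vadd (r2 tau) (vscale T e)) (r2 tau))) with (vnorm (vscale T e)).
    rewrite vnorm_scale, He, Rabs_pos_eq; lra.
    apply vnorm_ext; unfold vsub, vadd, vscale, c1, c2, c3; simpl; ring. }
  pose proof (ret_eq r2 v Hder Hsup _ _ _ Hr) as Eq.
  assert (Hd : delay r2 (vadd (r2 tau) (vscale T e)) (tau + T) = T) by (unfold delay; rewrite Eq; ring).
  split.
  - unfold inG. rewrite Hd. lra.
  - unfold phi. rewrite Hd, Eq. f_equal. unfold edir. rewrite Hd, Eq.
    destruct e as [[e1 e2] e3]. unfold vscale, vsub, vadd, c1, c2, c3; simpl.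
    f_equal; [f_equal|]; field; lra.
Qed.

Lemma bij3 r1 t : inG r2 r1 t -> psi r2 (phi r2 r1 t) = (r1, t).
Proof.
  intros HG. unfold inG in HG. unfold phi, psi, edir. unfold delay in *.
  set (s := ret_time r2 r1 t) in *.
  f_equal.
  - destruct r1 as [[a b] c]. unfold vscale, vsub, vadd, c1, c2, c3; simpl. f_equal; [f_equal|]; field; lra.
  - ring.
Qed.

End Bij.

Definition D1 (r2 v : R -> R3) (c m : nat) : R -> R :=
  match m with
  | 0%nat => fun s => compc c (r2 s)
  | 1%nat => fun s => compc c (v s)
  | _ => fun _ => 0
  end.

Lemma deriv3_compc f t w c : deriv3 f t w -> derivable_pt_lim (fun s => compc c (f s)) t (compc c w).
Proof. intros [H1 [H2 H3]]. destruct c as [|[|c]]; simpl; auto. Qed.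

Definition DI (r2 : R -> R3) (c m : nat) : R -> R := seqD (fun s => compc c (r2 s)) m.

Lemma CkR_compc k r2 c : CkR3 k r2 -> CkR k (fun s => compc c (r2 s)).
Proof. intros [H1 [H2 H3]]. destruct c as [|[|c]]; simpl; auto. Qed.

Theorem mainTheorem7 (r2 : R -> R3) (Hadm : admissible r2) :
  (forall r1 t, inG r2 r1 t -> inG1 (phi r2 r1 t)) /\
  (forall p, inG1 p ->
     inG r2 (fst (psi r2 p)) (snd (psi r2 p)) /\
     phi r2 (fst (psi r2 p)) (snd (psi r2 p)) = p) /\
  (forall r1 t, inG r2 r1 t -> psi r2 (phi r2 r1 t) = (r1, t)) /\
  (CkMap 1 (G4 r2) (phiV r2) /\ CkMap_on_subset 1 G1_5 (psiV r2)) /\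
  (CinfR3 r2 -> CinfMap (G4 r2) (phiV r2) /\ CinfMap_on_subset G1_5 (psiV r2)).
Proof.
  destruct Hadm as [v [a [j [Hv [Ha [Hj [Hjc [Hlt [Hsup Hbd]]]]]]]]].
  split; [exact (bij1 r2 v Hv Hsup)|].
  split; [exact (bij2 r2 v Hv Hsup)|].
  split; [exact (bij3 r2)|].
  split.
  - assert (HD : forall c m, (m < 1)%nat -> forall s, derivable_pt_lim (D1 r2 v c m) s (D1 r2 v c (S m) s)).
    { intros c m Hm s. destruct m; [|lia]. simpl. apply deriv3_compc; auto. }
    assert (HDc : forall c m, (m <= 1)%nat -> continuity (D1 r2 v c m)).
    { intros c m Hm s. destruct m as [|[|m]]; [| |lia]; simpl.
      - eapply cpt_of_dpl. apply deriv3_compc; auto.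
      - eapply cpt_of_dpl. apply deriv3_compc; auto. }
    split.
    + apply (phiV_Ck r2 v Hv Hsup (D1 r2 v) (fun c s => eq_refl) (fun c s => eq_refl) 1 HD HDc 1 (le_n 1)).
    + apply (psiV_Ck_sub r2 (D1 r2 v) (fun c s => eq_refl) 1 HD HDc 1 (le_n 1)).
  - intros Hinf.
    assert (Hall : forall c k, CkR k (fun s => compc c (r2 s))).
    { intros c k. apply CkR_compc. apply Hinf. }
    assert (HD : forall N c m, (m < N)%nat -> forall s, derivable_pt_lim (DI r2 c m) s (DI r2 c (S m) s)).
    { intros N c m _ s. apply (seqD_ok _ (Hall c) m). }
    assert (HDc : forall N c m, (m <= N)%nat -> continuity (DI r2 c m)).
    { intros N c m _. apply (proj1 (seqD_ok _ (Hall c) m) 0%nat). }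
    assert (HD1 : forall c s, DI r2 c 1 s = compc c (v s)).
    { intros c s. eapply uniqueness_limite. apply (proj2 (seqD_ok _ (Hall c) 0%nat)).
      apply deriv3_compc; auto. }
    split.
    + intros k. apply (phiV_Ck r2 v Hv Hsup (DI r2) (fun c s => eq_refl) HD1 k (HD k) (HDc k) k (le_n k)).
    + intros y Hy. destruct (psiV_Ck_sub r2 (DI r2) (fun c s => eq_refl) 0 (HD 0%nat) (HDc 0%nat) 0 (le_n 0) y Hy)
        as [V [Fe [H1 [H2 [_ H4]]]]].
      exists (fun _ => True), (psiV r2). split; [|split; [exact I|split]].
      * intros x _. exists 1. split; [lra|]. auto.
      * intros k. apply (psiV_Ck r2 (DI r2) (fun c s => eq_refl) k (HD k) (HDc k) k (le_n k)).
      * auto.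
Qed.
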